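(* Let $G$ be a finite subset of $\mathbb{N}^2$ that has at least one connected v-bridge. If $G$ contains a connected component $C$ (of the full grid graph of $G$) such that $C\cap(\{r_G\}\times\mathbb{N})\neq\emptyset$, $C\cap(\mathbb{N}\times\{t_G\})\neq\emptyset$ and $C\cap(\mathbb{N}\times\{b_G\})=\emptyset$, then there exists a point $\vec x_{NE}\in G\setminus C$ such that $E(\vec x_{NE})\notin G$, $\vec x_{NE}\in\mathbb{N}\times\{t_G\}$ and $\vec x_{NE}\notin\{r_G\}\times\mathbb{N}$.
   Context: The full grid graph of $V\subseteq\mathbb{Z}^2$ has vertex set $V$ and an edge between $\vec x,\vec y$ iff $\|\vec x-\vec y\|=1$; paths and connected components are taken in this graph. For a finite $S\subseteq\mathbb{Z}^2$ let $l_S=\min_{(x,y)\in S}x$, $r_S=\max_{(x,y)\in S}x$, $b_S=\min_{(x,y)\in S}y$, $t_S=\max_{(x,y)\in S}y$. An h-bridge of $S$ is a subset of $S$ of the form $\{(l_S,y),(r_S,y)\}$; a v-bridge is a subset of $S$ of the form $\{(x,b_S),(x,t_S)\}$. A bridge is connected if there is a simple path in (the full grid graph of) $S$ connecting its two points. Directions: $N(x,y)=(x,y+1)$, $E(x,y)=(x+1,y)$, $S(x,y)=(x,y-1)$, $W(x,y)=(x-1,y)$. *)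

(* Defs.v *)
(* Points of N^2 are pairs (x,y) : nat * nat.
   A finite subset G of N^2 is given by a (finite) list of its points;
   membership is  p \in G  (duplicates/order are irrelevant). *)
From mathcomp Require Import all_boot.
Set Implicit Arguments. Unset Strict Implicit. Unset Printing Implicit Defensive.

Definition point := (nat * nat)%type.

Definition dirN (p : point) : point := (p.1, p.2.+1).
Definition dirE (p : point) : point := (p.1.+1, p.2).
Definition dirS (p : point) : point := (p.1, p.2.-1).
Definition dirW (p : point) : point := (p.1.-1, p.2).

Definition grid_adj (p q : point) : bool :=
  ((p.1 == q.1) && ((p.2 == q.2.+1) || (q.2 == p.2.+1))) ||
  ((p.2 == q.2) && ((p.1 == q.1.+1) || (q.1 == p.1.+1))).

(* extremal coordinates of a finite set (only meaningful for nonempty S) *)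
Definition lS (S : seq point) : nat := \big[minn/(head (0,0) S).1]_(p <- S) p.1.
Definition rS (S : seq point) : nat := \max_(p <- S) p.1.
Definition bS (S : seq point) : nat := \big[minn/(head (0,0) S).2]_(p <- S) p.2.
Definition tS (S : seq point) : nat := \max_(p <- S) p.2.

Definition simple_path_in (S : seq point) (x y : point) (s : seq point) : Prop :=
  all (fun p => p \in S) (x :: s) /\ path grid_adj x s /\ uniq (x :: s) /\ last x s = y.

Definition connected_in (S : seq point) (x y : point) : Prop :=
  exists s, simple_path_in S x y s.

Definition has_connected_vbridge (S : seq point) : Prop :=
  exists x, (x, bS S) \in S /\ (x, tS S) \in S /\ connected_in S (x, bS S) (x, tS S).

Definition is_component (S : seq point) (C : point -> Prop) : Prop :=
  exists c, c \in S /\ forall p, C p <-> connected_in S c p.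

(* Main.v *)
Require Import Defs.
From mathcomp Require Import all_boot zify.
From Stdlib Require Import Lia.

Ltac bcase := repeat match goal with
 | |- context [(@eq_op _ ?x ?y)] => let H := fresh in case: (@eqP nat x y) => H
 | |- context [(?x <= ?y)] => let H := fresh in case: (@leP x y) => H
 end; simpl; try done; try (exfalso; lia).

Definition cr (k X : nat) (u v : point) : bool :=
  (u.1 == v.1) && (u.1 < X) &&
  (((u.2 == k) && (v.2 == k.+1)) || ((u.2 == k.+1) && (v.2 == k))).

Fixpoint par (k X : nat) (u : point) (s : seq point) : bool :=
  if s is v :: s' then cr k X u v (+) par k X v s' else false.

Definition phi (k X : nat) (p : point) : bool := (p.1 < X) && (p.2 == k.+1).

Lemma adjP (u v : point) : grid_adj u v ->
  (u.1 = v.1 /\ u.2 = v.2.+1) \/ (u.1 = v.1 /\ v.2 = u.2.+1) \/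
  (u.2 = v.2 /\ u.1 = v.1.+1) \/ (u.2 = v.2 /\ v.1 = u.1.+1).
Proof.
rewrite /grid_adj; case/orP=> /andP [/eqP -> /orP [/eqP -> | /eqP ->]]; tauto.
Qed.

Lemma cr_total k X u v : grid_adj u v -> u.1 < X -> v.1 < X -> cr k X u v = (k < u.2) (+) (k < v.2).
Proof. move=> H; move: H (adjP _ _ H); case: u => [a b]; case: v => [c d] /= _ [[-> ->]|[[-> ->]|[[-> ->]|[-> ->]]]] ; rewrite /cr /= ?eqxx; bcase. Qed.

Lemma cr_horiz k X u v : u != (X,k) -> v != (X,k) -> cr k X.+1 u v = cr k X u v.
Proof. case: u => a b; case: v => c d; rewrite /cr !xpair_eqE /=; bcase. Qed.

Lemma cr_vert k X u v : grid_adj u v -> u != (X,k.+1) -> v != (X,k.+1) ->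
  cr k X u v (+) cr k.+1 X u v = phi k X u (+) phi k X v.
Proof. move=> H; move: H (adjP _ _ H); case: u => [a b]; case: v => [c d] /= _ [[-> ->]|[[-> ->]|[[-> ->]|[-> ->]]]]; rewrite /cr /phi !xpair_eqE /= ?eqxx; bcase. Qed.

Lemma cr_zero k X u v : u.2 <= k -> v.2 <= k -> cr k X u v = false.
Proof. case: u => a b; case: v => c d; rewrite /cr /=; bcase. Qed.

Lemma par_total k X u s : path grid_adj u s -> all (fun p : point => p.1 < X) (u :: s) ->
  par k X u s = (k < u.2) (+) (k < (last u s).2).
Proof.
elim: s u => [|v s IH] u /=; first by rewrite addbb.
case/andP=> Huv Hp /and3P [Hu Hv Hs].
rewrite (cr_total k X u v Huv Hu Hv) IH //=; last by rewrite Hv.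
by rewrite -addbA (addbA (k < v.2)) addbb.
Qed.

Lemma par_horiz k X u s : (X, k) \notin u :: s -> par k X.+1 u s = par k X u s.
Proof.
elim: s u => [|v s IH] u //=.
rewrite in_cons negb_or => /andP [Hu Hvs]; move: (Hvs); rewrite in_cons negb_or => /andP [Hv _].
rewrite IH // cr_horiz //; rewrite eq_sym //.
Qed.

Lemma par_vert k X u s : path grid_adj u s -> (X, k.+1) \notin u :: s ->
  par k X u s (+) par k.+1 X u s = phi k X u (+) phi k X (last u s).
Proof.
elim: s u => [|v s IH] u /=; first by rewrite addbb.
case/andP=> Huv Hp; rewrite in_cons negb_or => /andP [Hu Hvs].
move: (Hvs); rewrite in_cons negb_or => /andP [Hv _].
have E := cr_vert k X u v Huv.
have -> : cr k X u v (+) par k X v s (+) (cr k.+1 X u v (+) par k.+1 X v s)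
  = (cr k X u v (+) cr k.+1 X u v) (+) (par k X v s (+) par k.+1 X v s).
  by case: (cr k X u v); case: (cr k.+1 X u v); case: (par k X v s); case: (par k.+1 X v s).
rewrite (IH v Hp Hvs) E; try by rewrite eq_sym.
by rewrite -addbA (addbA (phi k X v)) addbb.
Qed.

Lemma par_zero k X u s : all (fun p : point => p.2 <= k) (u :: s) -> par k X u s = false.
Proof.
elim: s u => [|v s IH] u //= /and3P [Hu Hv Hs].
by rewrite cr_zero // IH //= Hv.
Qed.

Lemma adj_sym u v : grid_adj u v = grid_adj v u.
Proof.
case: u => a b; case: v => c d; rewrite /grid_adj /=.
bcase.
Qed.

Definition reach (S : seq point) (x y : point) : Prop :=
  exists s, all (fun p => p \in S) (x :: s) /\ path grid_adj x s /\ last x s = y.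

Lemma reach_refl {S x} : x \in S -> reach S x x.
Proof. by move=> H; exists [::]; rewrite /= H. Qed.

Lemma reach_in {S x y} : reach S x y -> x \in S /\ y \in S.
Proof.
case=> s [Ha [_ <-]]; split; first by move: Ha => /andP [].
exact: (allP Ha _ (mem_last _ _)).
Qed.

Lemma reach_step {S a u v} : reach S a u -> grid_adj u v -> v \in S -> reach S a v.
Proof.
case=> s [Ha [Hp Hl]] Huv Hv; exists (rcons s v).
rewrite -rcons_cons all_rcons Hv Ha rcons_path Hp Hl Huv last_rcons.
by repeat split.
Qed.

Lemma reach_trans {S x y z} : reach S x y -> reach S y z -> reach S x z.
Proof.
case=> s1 [A1 [P1 L1]] [s2 [A2 [P2 L2]]]; exists (s1 ++ s2).
case/andP: A2 => _ A2.
rewrite -cat_cons all_cat A1 cat_path P1 last_cat L1 P2 L2 /=.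
by repeat split.
Qed.

Lemma reach_sym {S x y} : reach S x y -> reach S y x.
Proof.
case=> s; elim: s x => [|v s IH] x [A [P L]].
  by rewrite -L; apply: reach_refl; move: A => /andP [].
move: A P L => /= /andP [Hx A] /andP [Hxv P] L.
have R : reach S y v := IH v (conj A (conj P L)).
by apply: (reach_step R) => //; rewrite adj_sym.
Qed.

Lemma walk_all {S a u s} : reach S a u -> path grid_adj u s ->
  all (fun p => p \in S) (u :: s) -> forall z, z \in u :: s -> reach S a z.
Proof.
move: u; elim: s => [|v s IH] u Ru.
  by move=> _ _ z; rewrite inE => /eqP ->.
move=> /= /andP [Huv Hp] /andP [Hu Hvs] z; rewrite in_cons => /orP [/eqP -> //|Hz].
apply: (IH v) => //.
by apply: (reach_step Ru Huv); move: Hvs => /andP [].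
Qed.

Lemma conn_reach {S x y} : connected_in S x y -> reach S x y.
Proof. by case=> s [A [P [_ L]]]; exists s. Qed.

Lemma reach_conn {S x y} : reach S x y -> connected_in S x y.
Proof.
case=> s [A [P <-]]; case: (shortenP P) => s' P' U' Sub'.
exists s'; split; last by [].
apply/allP => z; rewrite in_cons => /orP [/eqP ->|/Sub' zs].
  by move: A => /andP [].
by apply: (allP A); rewrite in_cons zs orbT.
Qed.

Lemma bigmin_le (S : seq point) i (x : point) : x \in S -> \big[minn/i]_(p <- S) p.2 <= x.2.
Proof.
elim: S => [|a S IH] //; rewrite big_cons in_cons => /orP [/eqP ->|H].
  exact: geq_minl.
exact: leq_trans (geq_minr _ _) (IH H).
Qed.

From Stdlib Require Import Classical.

Theorem mainTheorem4 (G : seq point) (C : point -> Prop) :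
  has_connected_vbridge G ->
  is_component G C ->
  (exists y, C (rS G, y)) ->
  (exists x, C (x, tS G)) ->
  ~ (exists x, C (x, bS G)) ->
  exists xNE : point,
    xNE \in G /\ ~ C xNE /\ dirE xNE \notin G /\ xNE.2 = tS G /\ xNE.1 <> rS G.
Proof.
move=> [x0 [Hb [Ht [sP [HallP [HpathP [_ HlastP]]]]]]] [c [Hc HC]] [y Hy] [x1 Hx1] Hnob.
apply: NNPP => Hno.
have Cr : forall p, C p <-> reach G c p.
  by move=> p; split => H; [apply/conn_reach/HC | apply/HC/reach_conn].
have inb : forall p, p \in G -> bS G <= p.2 /\ p.2 <= tS G /\ p.1 <= rS G.
  move=> p Hp; split; first exact: bigmin_le.
  by split; apply: leq_bigmax_seq.
have Cin : forall p, C p -> p \in G by move=> p /Cr /reach_in [].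
have notP : forall z, z \in (x0, bS G) :: sP -> ~ C z.
  move=> z Hz Cz.
  have R0 : reach G (x0, bS G) z := walk_all (reach_refl Hb) HpathP HallP z Hz.
  apply: Hnob; exists x0; apply/Cr.
  exact: reach_trans (proj1 (Cr z) Cz) (reach_sym R0).
have run : forall n, x0 + n <= rS G -> (x0 + n, tS G) \in G /\ ~ C (x0 + n, tS G).
  elim=> [|n IH] Hn.
    rewrite addn0; split => //; apply: notP; rewrite -HlastP; exact: mem_last.
  have Hn' : x0 + n <= rS G by rewrite (leq_trans _ Hn) // leq_add2l.
  have [Hin HnC] := IH Hn'.
  rewrite addnS in Hn *.
  have HE : ((x0 + n).+1, tS G) \in G.
    case E: (_ \in G) => //; exfalso; apply: Hno; exists (x0 + n, tS G).
    rewrite /dirE /= E; split => //; split => //; split => //; split => //.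
    by move=> Heq; rewrite Heq ltnn in Hn.
  split => // Cq; apply: HnC; apply/Cr.
  apply: (reach_step (proj1 (Cr _) Cq)) => //.
  by rewrite /grid_adj /= !eqxx /= orbT.
have run' : forall x, x0 <= x -> x <= rS G -> ~ C (x, tS G).
  move=> x H1 H2; have := run (x - x0); rewrite subnKC // => /(_ H2) [] //.
pose W (p : point) := par p.2 p.1 (x0, bS G) sP.
have hstep : forall a k, C (a, k) -> C (a.+1, k) -> W (a, k) = W (a.+1, k).
  move=> a k Ca _; rewrite /W /= par_horiz //.
  by apply/negP => H; exact: notP _ H Ca.
have vstep : forall a k, C (a, k) -> C (a, k.+1) -> W (a, k) = W (a, k.+1).
  move=> a k Ca Ca1.
  have N : (a, k.+1) \notin (x0, bS G) :: sP by apply/negP => H; exact: notP _ H Ca1.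
  have := par_vert k a (x0, bS G) sP HpathP N.
  have [Hbk [_ Har]] := inb _ (Cin _ Ca).
  rewrite HlastP /phi /=.
  have -> : (bS G == k.+1) = false.
    by case: eqP => // E; move: Hbk; rewrite /= E ltnn.
  have -> : ((x0 < a) && (tS G == k.+1)) = false.
    case: (boolP (x0 < a)) => //= H1; case: eqP => // E; exfalso.
    by apply: (run' a (ltnW H1) Har); rewrite E.
  rewrite andbF /W /=.
  by case: (par k a _ _); case: (par k.+1 a _ _).
have step : forall p q, C p -> C q -> grid_adj p q -> W p = W q.
  move=> [a1 b1] [c1 d1] Cp Cq H.
  move: (adjP _ _ H) => /= [[E1 E2]|[[E1 E2]|[[E1 E2]|[E1 E2]]]]; subst.
  - by symmetry; apply: vstep.
  - by apply: vstep.
  - by symmetry; apply: hstep.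
  - by apply: hstep.
have allW : forall s u, reach G c u -> path grid_adj u s ->
    all (fun p => p \in G) (u :: s) -> W (last u s) = W u.
  elim=> [|v s IH] u Ru //= /andP [Huv Hp] /andP [Hu Hvs].
  have Hv : v \in G by move: Hvs => /andP [].
  have Rv := reach_step Ru Huv Hv.
  rewrite (IH v Rv Hp Hvs).
  by symmetry; apply: step => //; apply/Cr.
have WC : forall p, C p -> W p = W c.
  move=> p /Cr [s [A [P L]]]; rewrite -L; apply: allW => //; exact: reach_refl.
have E1 := WC _ Hx1; have E2 := WC _ Hy.
have W1 : W (x1, tS G) = false.
  rewrite /W /= par_zero //; apply/allP => z Hz.
  by have [_ [? _]] := inb z (allP HallP z Hz).
have W2 : W (rS G, y) = true.
  rewrite /W /= -par_horiz; last by apply/negP => H; exact: notP _ H Hy.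
  rewrite par_total //; last first.
    apply/allP => z Hz; have [_ [_ ?]] := inb z (allP HallP z Hz); by rewrite ltnS.
  rewrite HlastP /=.
  have [Hby [Hyt _]] := inb _ (Cin _ Hy).
  have [_ [_ Hx0r]] := inb _ Ht.
  have -> : (y < bS G) = false by rewrite ltnNge Hby.
  have Hyt' : y < tS G.
    rewrite ltn_neqAle Hyt andbT; apply/eqP => E.
    by apply: (run' (rS G) Hx0r (leqnn _)); rewrite -E.
  by rewrite Hyt'.
by move: E1 E2; rewrite W1 W2 => <-.
Qed.
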